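(* Let $p$ be a prime, $e\geq 2$, and $G$ a finite abelian $p$-group. Let $\overline{f_e}: V(\mathbb{Z}_{p^e}G)\to V(\mathbb{Z}_{p^{e-1}}G)$ be the group homomorphism induced by the ring homomorphism $\mathbb{Z}_{p^e}G\to\mathbb{Z}_{p^{e-1}}G$, $\sum_g a_g g\mapsto \sum_g (a_g \bmod p^{e-1}) g$. Then $\ker(\overline{f_e})=1+p^{e-1}\omega(\mathbb{Z}_{p^e}G)$ is an elementary abelian $p$-group of order $p^{|G|-1}$ and \[ V(\mathbb{Z}_{p^e}G)/\big(1+p^{e-1}\omega(\mathbb{Z}_{p^e}G)\big)\cong V(\mathbb{Z}_{p^{e-1}}G). \]
   Context: $\mathbb{Z}_{p^k}$ is the ring of residues modulo $p^k$. For a commutative ring $R$, $\omega(RG)$ is the augmentation ideal of $RG$ (elements whose coefficients sum to $0$), and $V(RG)=1+\omega(RG)$ is the group of normalized units. $1+p^{e-1}\omega(\mathbb{Z}_{p^e}G)=\{1+p^{e-1}z: z\in\omega(\mathbb{Z}_{p^e}G)\}$. *)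

(* Defs.v *)
From HB Require Import structures.
From mathcomp Require Import all_boot all_order all_algebra all_fingroup all_solvable.
Set Implicit Arguments. Unset Strict Implicit. Unset Printing Implicit Defensive.
Import GRing.Theory.
Local Open Scope ring_scope.
Local Open Scope group_scope.

(* The group ring R gT: finitely supported (= all, gT finite) functions gT -> R,
   i.e. formal sums \sum_g a_g g, with convolution product. *)
Definition gring (R : finNzRingType) (gT : finGroupType) : predArgType :=
  {ffun gT -> R}.

Section GroupRing.
Variables (R : finNzRingType) (gT : finGroupType).

HB.instance Definition _ := Finite.on (gring R gT).
HB.instance Definition _ := GRing.Zmodule.on (gring R gT).

Definition gring_one : gring R gT := [ffun g : gT => ((g == 1%g) %:R)%R].
Definition gring_mul (a b : gring R gT) : gring R gT :=
  [ffun g : gT => (\sum_(h : gT) a h * b (h^-1 * g)%g)%R].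

Lemma gring_mulA : associative gring_mul.
Proof.
move=> a b c; apply/ffunP=> g; rewrite !ffunE.
under eq_bigr do rewrite ffunE big_distrr /=.
under [RHS]eq_bigr do rewrite ffunE big_distrl /=.
rewrite [RHS]exchange_big /=; apply: eq_bigr => h _.
rewrite [RHS](reindex_inj (mulgI h)) /=; apply: eq_bigr => k _.
by rewrite mulKg invMg mulgA mulrA.
Qed.

Lemma gring_mul1r : left_id gring_one gring_mul.
Proof.
move=> a; apply/ffunP=> g; rewrite ffunE (bigD1 1) //= big1 => [|h /negbTE h1].
  by rewrite ffunE eqxx mul1r invg1 mul1g addr0.
by rewrite ffunE h1 mul0r.
Qed.

Lemma gring_mulr1 : right_id gring_one gring_mul.
Proof.
move=> a; apply/ffunP=> g; rewrite ffunE (bigD1 g) //= big1 => [|h hg].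
  by rewrite ffunE mulVg eqxx mulr1 addr0.
by rewrite ffunE -eq_mulVg1 (negbTE hg) mulr0.
Qed.

Lemma gring_mulDl : left_distributive gring_mul +%R.
Proof.
move=> a b c; apply/ffunP=> g; rewrite !ffunE -big_split /=.
by apply: eq_bigr => h _; rewrite ffunE mulrDl.
Qed.

Lemma gring_mulDr : right_distributive gring_mul +%R.
Proof.
move=> a b c; apply/ffunP=> g; rewrite !ffunE -big_split /=.
by apply: eq_bigr => h _; rewrite ffunE mulrDr.
Qed.

Lemma gring_one_neq0 : gring_one != 0%R.
Proof.
apply/eqP => /ffunP /(_ 1); rewrite !ffunE eqxx; apply/eqP; exact: oner_neq0.
Qed.

HB.instance Definition _ := GRing.Zmodule_isNzRing.Build (gring R gT)
  gring_mulA gring_mul1r gring_mulr1 gring_mulDl gring_mulDr gring_one_neq0.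

Definition gring_unit : pred (gring R gT) :=
  fun a => [exists b : gring R gT, (b * a == 1)%R && (a * b == 1)%R].
Definition gring_inv (a : gring R gT) : gring R gT :=
  odflt a [pick b : gring R gT | (b * a == 1)%R && (a * b == 1)%R].

Lemma gring_mulVr : {in gring_unit, left_inverse 1%R gring_inv *%R}.
Proof.
move=> a /existsP ua; rewrite /gring_inv; case: pickP => [b /andP[/eqP] //|].
by move=> none; case: ua => b; rewrite none.
Qed.

Lemma gring_divrr : {in gring_unit, right_inverse 1%R gring_inv *%R}.
Proof.
move=> a /existsP ua; rewrite /gring_inv; case: pickP => [b /andP[_ /eqP] //|].
by move=> none; case: ua => b; rewrite none.
Qed.

Lemma gring_unitP (x y : gring R gT) : (y * x = 1 /\ x * y = 1)%R -> gring_unit x.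
Proof. by case=> h1 h2; apply/existsP; exists y; rewrite h1 h2 !eqxx. Qed.

Lemma gring_inv_out : {in [predC gring_unit], gring_inv =1 id}.
Proof.
move=> a; rewrite inE /= => /existsP ua; rewrite /gring_inv; case: pickP => //.
by move=> b hb; case: ua; exists b.
Qed.

HB.instance Definition _ := GRing.NzRing_hasMulInverse.Build (gring R gT)
  gring_mulVr gring_divrr gring_unitP gring_inv_out.

Definition aug (a : gring R gT) : R := (\sum_(g : gT) a g)%R.

Definition aug_ideal : {set gring R gT} := [set z | aug z == 0%R].

Definition Vunits : {set {unit gring R gT}} :=
  [set u : {unit gring R gT} | aug (val u) == 1%R].

End GroupRing.

Definition red_gring (p e : nat) (gT : finGroupType)
  (a : gring 'Z_(p ^ e) gT) : gring 'Z_(p ^ e.-1) gT :=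
  [ffun g => (((a g : 'I__) : nat)%:R : 'Z_(p ^ e.-1))%R].

Definition ker_red (p e : nat) (gT : finGroupType) : {set {unit gring 'Z_(p ^ e) gT}} :=
  [set u in Vunits 'Z_(p ^ e) gT | @red_gring p e gT (val u) == 1%R].

Definition one_plus_pomega (p e : nat) (gT : finGroupType) :
  {set {unit gring 'Z_(p ^ e) gT}} :=
  [set u : {unit gring 'Z_(p ^ e) gT} |
     [exists z in aug_ideal 'Z_(p ^ e) gT, val u == (1 + z *+ (p ^ e.-1))%R]].

(* Main.v *)
Require Import Defs.
From HB Require Import structures.
From mathcomp Require Import all_boot all_order all_algebra all_fingroup all_solvable.
From mathcomp Require Import zify.
Set Implicit Arguments. Unset Strict Implicit. Unset Printing Implicit Defensive.
Import GRing.Theory.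
Local Open Scope ring_scope.

Section Cast.
Variables (n m : nat).
Hypotheses (n1 : (1 < n)%N) (m1 : (1 < m)%N) (mn : (m %| n)%N).

Definition zcast (x : 'Z_n) : 'Z_m := (((x : nat)%:R) : 'Z_m)%R.

Lemma Zn_natE (x : 'Z_n) : (((x : nat)%:R : 'Z_n) = x)%R.
Proof. by rewrite natr_Zp. Qed.

Lemma zcast_nat k : zcast (k%:R) = (k%:R)%R.
Proof.
rewrite /zcast val_Zp_nat // -(Zp_nat_mod m1 (k %% n)) modn_dvdm //.
by rewrite Zp_nat_mod.
Qed.

Lemma zcastD x y : zcast (x + y) = (zcast x + zcast y)%R.
Proof. by rewrite -[x]Zn_natE -[y]Zn_natE -natrD !zcast_nat natrD. Qed.
Lemma zcastM x y : zcast (x * y) = (zcast x * zcast y)%R.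
Proof. by rewrite -[x]Zn_natE -[y]Zn_natE -natrM !zcast_nat natrM. Qed.
Lemma zcast0 : zcast 0 = 0%R.
Proof. by rewrite -(mulr0n (1 : 'Z_n)) zcast_nat. Qed.
Lemma zcast1 : zcast 1 = 1%R.
Proof. by rewrite -(mulr1n (1 : 'Z_n)) zcast_nat. Qed.
Lemma zcastN x : zcast (- x) = (- zcast x)%R.
Proof. by apply/eqP; rewrite -subr_eq0 opprK -zcastD addNr zcast0. Qed.
Lemma zcastB x y : zcast (x - y) = (zcast x - zcast y)%R.
Proof. by rewrite zcastD zcastN. Qed.
Lemma zcast_sum (I : finType) (F : I -> 'Z_n) :
  zcast (\sum_i F i) = (\sum_i zcast (F i))%R.
Proof. exact: (big_morph zcast zcastD zcast0). Qed.
Lemma zcast_eq0 (x : 'Z_n) : (zcast x == 0)%R = (m %| x)%N.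
Proof. by rewrite /zcast -(Zp_nat_mod m1) -val_eqE /= val_Zp_nat // modn_mod. Qed.

End Cast.
Section GR.
Variables (R : finNzRingType) (gT : finGroupType).
Implicit Types a b z : gring R gT.

Lemma gring1E g : (1 : gring R gT) g = (g == 1%g)%:R.
Proof. by rewrite ffunE. Qed.
Lemma gringME a b g : (a * b) g = \sum_h a h * b (h^-1 * g)%g.
Proof. by rewrite ffunE. Qed.
Lemma gringDE a b g : (a + b) g = a g + b g.
Proof. by rewrite ffunE. Qed.
Lemma gringNE a g : (- a) g = - a g.
Proof. by rewrite ffunE. Qed.
Lemma gringMnE a k g : (a *+ k) g = a g *+ k.
Proof. by rewrite ffunMnE. Qed.

Lemma augD a b : aug (a + b) = aug a + aug b.
Proof. by rewrite /aug -big_split; apply: eq_bigr => g _; rewrite gringDE. Qed.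
Lemma aug0 : aug (0 : gring R gT) = 0.
Proof. by rewrite /aug big1 // => g _; rewrite ffunE. Qed.
Lemma augN a : aug (- a) = - aug a.
Proof. by apply/eqP; rewrite -subr_eq0 opprK -augD addNr aug0. Qed.
Lemma augB a b : aug (a - b) = aug a - aug b.
Proof. by rewrite augD augN. Qed.
Lemma augMn a k : aug (a *+ k) = aug a *+ k.
Proof. by elim: k => [|k IH]; rewrite ?mulr0n ?aug0 // !mulrS augD IH. Qed.
Lemma aug1 : aug (1 : gring R gT) = 1.
Proof.
rewrite /aug (bigD1 1%g) //= big1 => [|g /negbTE g1]; last by rewrite gring1E g1.
by rewrite gring1E eqxx addr0.
Qed.
Lemma augM a b : aug (a * b) = aug a * aug b.
Proof.
rewrite /aug big_distrl /=.
under eq_bigr do rewrite gringME.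
rewrite exchange_big /=; apply: eq_bigr => h _.
rewrite -big_distrr /=; congr (_ * _).
by rewrite [RHS](reindex_inj (mulgI (h^-1)%g)).
Qed.

Definition delta (t : R) : gring R gT := [ffun g => if g == 1%g then t else 0].
Lemma aug_delta t : aug (delta t) = t.
Proof.
rewrite /aug (bigD1 1%g) //= big1 => [|g /negbTE g1]; last by rewrite ffunE g1.
by rewrite ffunE eqxx addr0.
Qed.
Lemma delta_Mn t k : delta t *+ k = delta (t *+ k).
Proof. by apply/ffunP => g; rewrite ffunMnE !ffunE; case: ifP; rewrite ?mul0rn. Qed.

Lemma delta0 : delta 0 = 0.
Proof. by apply/ffunP => g; rewrite !ffunE; case: ifP. Qed.

Lemma Vunits_group : group_set (Vunits R gT).
Proof.
apply/group_setP; split; first by rewrite inE /= aug1.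
by move=> x y; rewrite !inE /= => /eqP ax /eqP ay; rewrite augM ax ay mulr1.
Qed.
Canonical Vgroup := Group Vunits_group.

End GR.

Section Zring.
Variables (m : nat) (gT : finGroupType).
Hypothesis m1 : (1 < m)%N.
Lemma Mn_m (x : gring 'Z_m gT) : x *+ m = 0.
Proof. by apply/ffunP => g; rewrite gringMnE ffunE -mulr_natr pchar_Zp // mulr0. Qed.
Lemma Mn_dvd (x : gring 'Z_m gT) k : (m %| k)%N -> x *+ k = 0.
Proof. by move=> /dvdnP[q ->]; rewrite mulnC mulrnA Mn_m mul0rn. Qed.
End Zring.

Lemma unit_lr (R : unitRingType) (x l r : R) :
  l * x = 1 -> x * r = 1 -> x \is a GRing.unit.
Proof.
move=> hl hr; apply/unitrP; exists r; split=> //.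
have -> : r = l by rewrite -[l]mulr1 -hr mulrA hl mul1r.
exact: hl.
Qed.

Lemma card_aug_ideal (q : nat) (gT : finGroupType) : (1 < q)%N ->
  #|aug_ideal 'Z_q gT| = (q ^ (#|gT| - 1))%N.
Proof.
move=> q1.
set A0 := aug_ideal 'Z_q gT.
pose F (x : gring 'Z_q gT * 'Z_q) : gring 'Z_q gT := x.1 + delta gT x.2.
have FT : [set F x | x in setX A0 [set: 'Z_q]] = [set: gring 'Z_q gT].
  apply/setP => k; rewrite inE; apply/imsetP.
  exists (k - delta gT (aug k), aug k); last by rewrite /F /= subrK.
  by rewrite !inE augB aug_delta subrr eqxx.
have Finj : {in setX A0 [set: 'Z_q] &, injective F}.
  move=> [k t] [k' t']; rewrite !inE /F /= => /andP[/eqP ak _] /andP[/eqP ak' _] h.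
  have ht : t = t'.
    by have := congr1 (@aug _ gT) h; rewrite !augD !aug_delta ak ak' !add0r.
  by move: h; rewrite ht => /addIr ->.
have cG : #|[set: gring 'Z_q gT]| = (q ^ #|gT|)%N.
  by rewrite cardsT (card_ffun gT 'Z_q) card_ord Zp_cast.
have := card_in_imset Finj; rewrite FT cardsX cG.
have G0 : (0 < #|gT|)%N by apply/card_gt0P; exists 1%g.
rewrite cardsT card_ord Zp_cast // -{1}(prednK G0) expnSr subn1 => /eqP.
by rewrite eqn_pmul2r ?(ltnW q1) // => /eqP.
Qed.

Lemma ltZp (q : nat) (q1 : (1 < q)%N) (y : 'Z_q) : (y < q)%N.
Proof. by case: q q1 y => [|[|q]] //= _ y; exact: ltn_ord. Qed.

Section Main.
Variables (p e : nat) (gT : finGroupType).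
Hypotheses (hp : prime p) (he : (2 <= e)%N).

Local Notation n := (p ^ e)%N.
Local Notation c := (p ^ e.-1)%N.
Local Notation GA := (gring 'Z_(p ^ e) gT).
Local Notation GB := (gring 'Z_(p ^ e.-1) gT).

Lemma p1 : (1 < p)%N. Proof. exact: prime_gt1. Qed.
Lemma n_eq : n = (c * p)%N.
Proof. by rewrite -expnSr prednK // (leq_trans _ he). Qed.
Lemma c1 : (1 < c)%N.
Proof.
apply: (leq_trans p1); rewrite -{1}(expn1 p); apply: leq_pexp2l; [exact: prime_gt0 | lia].
Qed.
Lemma n1 : (1 < n)%N.
Proof. by rewrite n_eq (leq_trans c1) // leq_pmulr // ltnW // p1. Qed.
Lemma cn : (c %| n)%N. Proof. by rewrite n_eq dvdn_mulr. Qed.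
Lemma pn : (p %| n)%N. Proof. by rewrite n_eq dvdn_mull. Qed.
Lemma ncc : (n %| c * c)%N.
Proof. by rewrite n_eq dvdn_pmul2l ?expn_gt0 ?prime_gt0 // dvdn_exp //; lia. Qed.

Definition red := @red_gring p e gT.
Lemma redE a g : red a g = zcast (p ^ e.-1) (a g).
Proof. by rewrite ffunE. Qed.

Lemma redD a b : red (a + b) = red a + red b.
Proof. by apply/ffunP => g; rewrite gringDE !redE gringDE zcastD ?n1 ?c1 ?cn. Qed.
Lemma red0 : red 0 = 0.
Proof. by apply/ffunP => g; rewrite redE !ffunE zcast0 ?n1 ?c1 ?cn. Qed.
Lemma redN a : red (- a) = - red a.
Proof. by apply/ffunP => g; rewrite gringNE !redE gringNE zcastN ?n1 ?c1 ?cn. Qed.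
Lemma redB a b : red (a - b) = red a - red b.
Proof. by rewrite redD redN. Qed.
Lemma red1 : red 1 = 1.
Proof.
apply/ffunP => g; rewrite redE !gring1E.
by case: (g == 1%g); rewrite ?zcast1 ?zcast0 // ?n1 ?c1 ?cn.
Qed.
Lemma redM a b : red (a * b) = red a * red b.
Proof.
apply/ffunP => g; rewrite redE !gringME zcast_sum ?n1 ?c1 ?cn //.
by apply: eq_bigr => h _; rewrite zcastM ?n1 ?c1 ?cn // -!redE.
Qed.
Lemma redMn a k : red (a *+ k) = red a *+ k.
Proof. by elim: k => [|k IH]; rewrite ?mulr0n ?red0 // !mulrS redD IH. Qed.
Lemma red_Mnc a : red (a *+ c) = 0.
Proof. by rewrite redMn Mn_m // c1. Qed.
Lemma sqc (a b : GA) : (a *+ c) * (b *+ c) = 0.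
Proof. by rewrite mulrnAl mulrnAr -mulrnA Mn_dvd ?n1 ?ncc. Qed.

Lemma red_zero (w : GA) : red w = 0 -> exists w' : GA, w = w' *+ c.
Proof.
move=> /ffunP h.
exists [ffun g => ((((w g : 'I__) : nat) %/ c)%:R : 'Z_(p ^ e))].
apply/ffunP=> g; rewrite gringMnE ffunE -mulrnA divnK ?Zn_natE //.
have := h g; rewrite redE ffunE => /eqP; rewrite zcast_eq0 ?n1 ?c1 //.
Qed.

Lemma red_zero_sq (y : GA) : red y = 0 -> y * y = 0.
Proof. by move=> /red_zero [w ->]; rewrite sqc. Qed.

Lemma unit_1pl (y : GA) : red y = 0 -> (1 + y) \is a GRing.unit.
Proof.
move=> /red_zero_sq yy; apply: (@unit_lr _ _ (1 - y) (1 - y)).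
  by rewrite mulrBl mul1r mulrDr mulr1 yy addr0 addrK.
by rewrite mulrDl mul1r mulrBr mulr1 yy subr0 subrK.
Qed.

Definition L (v : GB) : GA := [ffun g => (((v g : 'I__) : nat)%:R : 'Z_(p ^ e))].
Lemma redL v : red (L v) = v.
Proof. by apply/ffunP => g; rewrite redE ffunE zcast_nat ?n1 ?c1 ?cn ?Zn_natE. Qed.

Lemma red_unit_lift (x : GA) : red x \is a GRing.unit -> x \is a GRing.unit.
Proof.
move=> ux; set u' := L (red x)^-1.
have h1 : red (x * u' - 1) = 0 by rewrite redB redM redL red1 mulrV // subrr.
have h2 : red (u' * x - 1) = 0 by rewrite redB redM redL red1 mulVr // subrr.
have U1 := unit_1pl h1; have U2 := unit_1pl h2.
rewrite addrC subrK in U1; rewrite addrC subrK in U2.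
apply: (@unit_lr _ _ ((u' * x)^-1 * u') (u' * (x * u')^-1)).
  by rewrite -mulrA mulVr.
by rewrite mulrA mulrV.
Qed.

Lemma red_unit (u : {unit GA}) : red (val u) \is a GRing.unit.
Proof.
apply: (@unit_lr _ _ (red (val u^-1)%g) (red (val u^-1)%g)).
  by rewrite -redM FinRing.val_unitV mulVr ?red1 // (valP u).
by rewrite -redM FinRing.val_unitV mulrV ?red1 // (valP u).
Qed.

Definition fm (u : {unit GA}) : {unit GB} := FinRing.Unit (red_unit u).
Lemma fmM : {in setT &, {morph fm : x y / (x * y)%g}}.
Proof. by move=> x y _ _; apply: val_inj; rewrite /= redM. Qed.
Canonical fmorph := Morphism fmM.

Lemma aug_red a : aug (red a) = zcast (p^e.-1) (aug a).
Proof. by rewrite /aug zcast_sum ?n1 ?c1 ?cn //; apply: eq_bigr => g _; exact: redE. Qed.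

Lemma ker_opo : ker_red p e gT = one_plus_pomega p e gT.
Proof.
apply/setP => u; rewrite !inE.
apply/andP/existsP => [[/eqP au ru]|[z /andP[zI /eqP uz]]].
- have ru' : red (val u) = 1 by apply/eqP.
  have h : red (val u - 1) = 0 by rewrite redB ru' red1 subrr.
  case: (red_zero h) => w hw.
  have aw : aug w *+ c = 0 by rewrite -augMn -hw augB au aug1 subrr.
  exists (w - delta gT (aug w)); rewrite inE augB aug_delta subrr eqxx /=.
  by apply/eqP; rewrite mulrnBl delta_Mn aw delta0 subr0 -hw addrC subrK.
- move: zI; rewrite inE => /eqP az; split.
    by rewrite uz augD aug1 augMn az mul0rn addr0.
  by change (red (val u) == 1); rewrite uz redD red1 red_Mnc addr0.
Qed.

Lemma kerV : ('ker_(Vgroup 'Z_(p^e) gT) fmorph)%g = ker_red p e gT.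
Proof.
by apply/setP => u; rewrite !inE /=; congr (_ && _).
Qed.

Lemma imV : (fmorph @* Vgroup 'Z_(p^e) gT)%g = Vunits 'Z_(p^e.-1) gT.
Proof.
rewrite morphimEsub ?subsetT //; apply/setP => v; apply/imsetP/idP.
  case=> u; rewrite !inE => /eqP au ->; change (aug (red (val u)) == 1).
  by rewrite aug_red au zcast1 ?n1 ?c1 ?cn.
rewrite inE => /eqP av.
set x0 := L (val v); set t := aug x0 - 1.
have zt : zcast (p ^ e.-1) t = 0.
  by rewrite zcastB ?n1 ?c1 ?cn // -aug_red redL av zcast1 ?n1 ?c1 ?cn // subrr.
have rd : red (delta gT t) = 0.
  by apply/ffunP => g; rewrite redE !ffunE; case: ifP; rewrite ?zt ?zcast0 ?n1 ?c1 ?cn.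
set x := x0 - delta gT t.
have rx : red x = val v by rewrite redB rd subr0 redL.
have ux : x \is a GRing.unit by apply: red_unit_lift; rewrite rx (valP v).
exists (FinRing.Unit ux); last by apply: val_inj.
by rewrite inE /= augB aug_delta /t opprB addrC subrK.
Qed.


Lemma opo_elt x : x \in one_plus_pomega p e gT -> exists z : GA, val x = 1 + z *+ c.
Proof. by rewrite inE => /existsP [z /andP [_ /eqP ->]]; exists z. Qed.

Lemma mul1p (A B : GA) : A * B = 0 -> (1 + A) * (1 + B) = 1 + (A + B).
Proof.
by move=> AB; rewrite mulrDl mul1r mulrDr mulr1 AB addr0 -addrA [B + A]addrC.
Qed.

Lemma exp1p (A : GA) k : A * A = 0 -> (1 + A) ^+ k = 1 + A *+ k.
Proof.
move=> AA; elim: k => [|k IH]; first by rewrite expr0 mulr0n addr0.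
by rewrite exprS IH mul1p ?mulrnAr ?AA ?mul0rn // mulrS.
Qed.

Lemma opo_abelem : (p.-abelem (one_plus_pomega p e gT))%g.
Proof.
rewrite -ker_opo -kerV; apply/abelemP => //; split.
  apply/centsP => x Hx y Hy; apply: val_inj.
  have {}Hx : x \in one_plus_pomega p e gT by rewrite -ker_opo -kerV.
  have {}Hy : y \in one_plus_pomega p e gT by rewrite -ker_opo -kerV.
  case: (opo_elt Hx) => a ha; case: (opo_elt Hy) => b hb.
  by rewrite !FinRing.val_unitM ha hb !mul1p ?sqc // [_ + a *+ c]addrC.
move=> x Hx; apply: val_inj.
have {}Hx : x \in one_plus_pomega p e gT by rewrite -ker_opo -kerV.
case: (opo_elt Hx) => a ha.
rewrite FinRing.val_unitX ha exp1p ?sqc // -mulrnA -n_eq Mn_m ?n1 //.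
by rewrite addr0.
Qed.


Definition Lp (k : gring 'Z_p gT) : GA := [ffun g => (((k g : 'I__) : nat)%:R : 'Z_(p ^ e))].
Lemma Uunit k : 1 + Lp k *+ c \is a GRing.unit.
Proof. exact: unit_1pl (red_Mnc _). Qed.
Definition U k : {unit GA} := insubd (1%g : {unit GA}) (1 + Lp k *+ c).
Lemma UE k : val (U k) = 1 + Lp k *+ c.
Proof. by rewrite /U insubdK // Uunit. Qed.

Lemma Lp_ortho (t : 'Z_(p^e)) : zcast p t = 0 -> t *+ c = 0.
Proof.
move/eqP; rewrite zcast_eq0 ?n1 ?p1 ?pn // => /dvdnP [q hq].
rewrite -[t]Zn_natE -mulrnA hq -mulnA [(p * _)%N]mulnC -n_eq.
by rewrite -(Zp_nat_mod n1) modnMl.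
Qed.

Let c0 : (0 < c)%N := ltnW c1.
Lemma Uinj : injective (U).
Proof.
move=> k k' h; have E1 := UE k; have E2 := UE k'.
rewrite h E2 in E1; move/addrI: E1 => h2.
apply/ffunP => g; have := congr1 (fun f : GA => f g) h2.
rewrite !gringMnE !ffunE -!mulrnA.
move=> /(congr1 (@nat_of_ord _)).
rewrite (val_Zp_nat n1) (val_Zp_nat n1).
have lt y : (nat_of_ord (y : 'Z_p) * c < n)%N.
  by rewrite n_eq [(c * p)%N]mulnC (ltn_pmul2r c0); exact: (ltZp p1).
rewrite (modn_small (lt (k g))) (modn_small (lt (k' g))).
move/eqP; rewrite (eqn_pmul2r c0) => /eqP.
by move/val_inj.
Qed.
Lemma opoE : one_plus_pomega p e gT = [set U k | k in aug_ideal 'Z_p gT].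
Proof.
apply/setP => x; apply/idP/imsetP.
  rewrite inE => /existsP [z /andP [zI /eqP hz]].
  move: zI; rewrite inE => /eqP az.
  exists [ffun g => zcast p (z g)].
    rewrite inE; apply/eqP; rewrite /aug.
    under eq_bigr do rewrite ffunE.
    by rewrite -(zcast_sum n1 p1 pn) -/(aug z) az (zcast0 n1 p1 pn).
  apply: val_inj; rewrite UE hz; congr (1 + _).
  have key (y : 'Z_n) : ((nat_of_ord (zcast p y))%:R *+ c : 'Z_n) = y *+ c.
    rewrite /zcast (val_Zp_nat p1) -mulrnA muln_modl [(p * c)%N]mulnC -n_eq.
    by rewrite (Zp_nat_mod n1) mulrnA Zn_natE.
  by apply/ffunP => g; rewrite !gringMnE !ffunE key.
case=> k; rewrite inE => /eqP ak ->.
have ah : aug (Lp k) *+ c = 0.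
  apply: Lp_ortho; rewrite /aug (zcast_sum n1 p1 pn).
  under eq_bigr do rewrite ffunE (zcast_nat n1 p1 pn) Zn_natE.
  exact: ak.
rewrite inE; apply/existsP; exists (Lp k - delta gT (aug (Lp k))).
rewrite inE augB aug_delta subrr eqxx /=; apply/eqP.
by rewrite UE mulrnBl delta_Mn ah delta0 subr0.
Qed.
End Main.

Local Close Scope ring_scope.
Local Open Scope group_scope.

Theorem lemma6 (p e : nat) (gT : finGroupType) :
  prime p -> (2 <= e)%N -> abelian [set: gT] -> p.-group [set: gT] ->
  [/\ ker_red p e gT = one_plus_pomega p e gT,
      p.-abelem (one_plus_pomega p e gT),
      #|one_plus_pomega p e gT| = (p ^ (#|gT| - 1))%N
    & Vunits 'Z_(p ^ e) gT / one_plus_pomega p e gT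
        \isog Vunits 'Z_(p ^ e.-1) gT].
Proof.
move=> hp he _ _; split.
- exact: ker_opo.
- exact: opo_abelem.
- rewrite (@opoE p e gT hp he) (card_in_imset (in2W (@Uinj p e gT hp he))).
  exact: card_aug_ideal (p1 hp).
- rewrite -(@ker_opo p e gT hp he) -(@kerV p e gT hp he) -(@imV p e gT hp he).
  exact: first_isog_loc (subsetT _).
Qed.
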